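(* Let $G$ be a group, $E$ a real Banach space, and $f\colon G\to E$ such that $\|f(xy)+f(xy^{-1})-2f(x)\|\le c$ for all $x,y\in G$, where $c>0$. Then the function $\hat f(x)=\lim_{k\to\infty}\frac{1}{2^k}f(x^{2^k})$ is well-defined, it is a $(G;E)$-pseudo-Jensen function, and $\|\hat f(x)-f(x)\|\le c+\|f(1)\|$ for all $x\in G$.
   Context: A function $g\colon G\to E$ is $(G;E)$-pseudo-Jensen if there is $d>0$ with $\|g(xy)+g(xy^{-1})-2g(x)\|\le d$ for all $x,y\in G$, and $g(x^n)=ng(x)$ for all $x\in G$, $n\in\mathbb{Z}$. *)

(* Defs.v *)
From HB Require Import structures.
From mathcomp Require Import all_boot all_order all_algebra.
From mathcomp Require Import all_classical all_reals all_analysis.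
Set Implicit Arguments. Unset Strict Implicit. Unset Printing Implicit Defensive.
Import Order.TTheory GRing.Theory Num.Theory.
Import numFieldNormedType.Exports.
Local Open Scope ring_scope.
Local Open Scope classical_set_scope.

Definition is_group (G : Type) (mul : G -> G -> G) (inv : G -> G) (one : G) : Prop :=
  [/\ (forall x y z, mul x (mul y z) = mul (mul x y) z),
      (forall x, mul one x = x), (forall x, mul x one = x),
      (forall x, mul (inv x) x = one) & (forall x, mul x (inv x) = one)].

Fixpoint gpown (G : Type) (mul : G -> G -> G) (one : G) (x : G) (n : nat) : G :=
  match n with
  | O => one
  | S m => mul x (gpown mul one x m)
  end.

Definition gpowz (G : Type) (mul : G -> G -> G) (inv : G -> G) (one : G)
  (x : G) (z : int) : G :=
  match z with
  | Posz n => gpown mul one x n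
  | Negz n => inv (gpown mul one x n.+1)
  end.

Definition pseudo_Jensen (R : realType) (G : Type) (mul : G -> G -> G)
  (inv : G -> G) (one : G) (E : normedModType R) (g : G -> E) : Prop :=
  (exists2 d : R, 0 < d &
     forall x y, `| g (mul x y) + g (mul x (inv y)) - (2 : R) *: g x | <= d) /\
  (forall x (n : int), g (gpowz mul inv one x n) = n%:~R *: g x).

Definition fhat (R : realType) (G : Type) (mul : G -> G -> G) (one : G)
  (E : normedModType R) (f : G -> E) (x : G) : E :=
  lim ((fun k : nat => ((2 : R) ^+ k)^-1 *: f (gpown mul one x (2 ^ k)%N)) @ \oo).

(* Main.v *)
Require Import Defs.
From HB Require Import structures.
From mathcomp Require Import all_boot all_order all_algebra.
From mathcomp Require Import all_classical all_reals all_analysis.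
Import Order.TTheory GRing.Theory Num.Theory.
Import numFieldNormedType.Exports.
Local Open Scope ring_scope.
Local Open Scope classical_set_scope.
From mathcomp Require Import lra.
Set Implicit Arguments. Unset Strict Implicit.
Section Grp.
Variables (G : Type) (mul : G -> G -> G) (inv : G -> G) (one : G).
Hypothesis HG : is_group mul inv one.
Local Notation p := (gpown mul one).

Lemma gmulA x y z : mul x (mul y z) = mul (mul x y) z. Proof. by case: HG. Qed.
Lemma gmul1 x : mul one x = x. Proof. by case: HG. Qed.
Lemma gmul1r x : mul x one = x. Proof. by case: HG. Qed.
Lemma gmulV x : mul x (inv x) = one. Proof. by case: HG. Qed.
Lemma gmulVl x : mul (inv x) x = one. Proof. by case: HG. Qed.

Lemma pD x m n : p x (m + n) = mul (p x m) (p x n).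
Proof. elim: m => [|m IH] /=; first by rewrite add0n gmul1. by rewrite IH gmulA. Qed.

Lemma p1 x : p x 1 = x. Proof. by rewrite /= gmul1r. Qed.

Definition comm a b := mul a b = mul b a.

Lemma comm_p a b n : comm a b -> comm (p a n) b.
Proof.
rewrite /comm => h; elim: n => [|n IH] /=; first by rewrite gmul1 gmul1r.
by rewrite -gmulA IH gmulA h -gmulA.
Qed.

Lemma commC a b : comm a b -> comm b a. Proof. by rewrite /comm. Qed.

Lemma p_mul a b n : comm a b -> p (mul a b) n = mul (p a n) (p b n).
Proof.
move=> h; elim: n => [|n IH] /=; first by rewrite gmul1.
rewrite IH -!gmulA; congr (mul a _); rewrite !gmulA; congr (mul _ _).
by rewrite (comm_p n h).
Qed.

Lemma inv_uniq a b : mul a b = one -> b = inv a.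
Proof. by move=> h; rewrite -[b]gmul1 -(gmulVl a) -gmulA h gmul1r. Qed.

Lemma p_inv a n : p (inv a) n = inv (p a n).
Proof.
apply: inv_uniq; elim: n => [|n IH] /=; first by rewrite gmul1.
have hc : comm (inv a) a by rewrite /comm gmulV gmulVl.
have e : mul a (p a n) = mul (p a n) a by rewrite (comm_p n (erefl : comm a a)).
by rewrite e -gmulA [mul a (mul (inv a) _)]gmulA gmulV gmul1 IH.
Qed.

Lemma comm_inv a b : comm a b -> comm a (inv b).
Proof.
rewrite /comm => h.
have e : mul (inv b) (mul (mul a b) (inv b)) = mul (inv b) (mul (mul b a) (inv b)) by rewrite h.
by move: e; rewrite -!gmulA gmulV gmul1r !gmulA gmulVl gmul1.
Qed.

Lemma comm1 a : comm one a. Proof. by rewrite /comm gmul1 gmul1r. Qed.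

Lemma comm_pp x m n : comm (p x m) (p x n).
Proof. by rewrite /comm -!pD addnC. Qed.
End Grp.
Section An.
Variables (R : realType) (G : Type) (mul : G -> G -> G) (inv : G -> G) (one : G).
Hypothesis HG : is_group mul inv one.
Variables (E : completeNormedModType R) (f : G -> E) (c : R).
Hypothesis hc : 0 < c.
Hypothesis hf : forall x y : G,
      `| f (mul x y) + f (mul x (inv y)) - (2 : R) *: f x | <= c.
Local Notation p := (gpown mul one).
Let C := c + `|f one|.
Definition a x k := ((2 : R) ^+ k)^-1 *: f (p x (2 ^ k)%N).

Lemma C_gt0 : 0 < C. Proof. by rewrite /C ltr_pwDl. Qed.

Lemma sq_bound y : `|f (mul y y) - (2:R) *: f y| <= C.
Proof.
have -> : f (mul y y) - (2:R) *: f y =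
   (f (mul y y) + f (mul y (inv y)) - (2 : R) *: f y) - f one.
  by rewrite (gmulV HG) addrAC addrK.
by rewrite (le_trans (ler_normB _ _)) // lerD2r hf.
Qed.

Lemma step x k : `|a x k.+1 - a x k| <= C * ((2:R) ^+ k.+1)^-1.
Proof.
rewrite /a expnS mul2n -addnn (pD HG).
set y := p x (2 ^ k)%N.
have -> : ((2:R) ^+ k)^-1 *: f y = ((2:R) ^+ k.+1)^-1 *: ((2:R) *: f y).
  by rewrite scalerA; congr (_ *: _); rewrite exprS invfM mulrC mulrA mulfV ?mul1r // pnatr_eq0.
rewrite -scalerBr normrZ mulrC ger0_norm; last by rewrite invr_ge0 exprn_ge0.
by rewrite ler_wpM2r ?sq_bound // invr_ge0 exprn_ge0.
Qed.

Lemma telesc x n m : `|a x (n + m)%N - a x n| <= C * (((2:R) ^+ n)^-1 - ((2:R) ^+ (n + m))^-1).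
Proof.
elim: m => [|m IH]; first by rewrite addn0 !subrr normr0 mulr0.
rewrite addnS.
have := step x (n + m).
set u := a x (n+m).+1; set v := a x (n + m); set w := a x n.
have -> : u - w = (u - v) + (v - w) by rewrite addrA subrK.
move=> h1; rewrite (le_trans (ler_normD _ _)) //.
have e : ((2:R) ^+ (n + m).+1)^-1 = ((2:R) ^+ (n + m))^-1 / 2.
  by rewrite exprS invfM mulrC.
move: h1 IH; rewrite e => h1 IH.
have := C_gt0 => hC.
nra.
Qed.

Lemma small_N e : 0 < e -> exists N, C * ((2:R) ^+ N)^-1 < e.
Proof.
move=> e0.
have h : `|(2:R)^-1| < 1 by rewrite ger0_norm ?invr_ge0 // invf_lt1 // ltr1n.
have /cvgr0_norm_lt /(_ (e / C)) := cvg_expr h.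
have hC := C_gt0.
move=> /(_ (divr_gt0 e0 hC)) [N _ HN].
exists N; have := HN N (leqnn N) => /=.
rewrite -exprVn ger0_norm ?exprn_ge0 ?invr_ge0 // ltr_pdivlMr // mulrC.
done.
Qed.

Lemma a_cvg x : cvg (a x @ \oo).
Proof.
apply/cauchy_cvgP; apply/cauchy_exP => e e0.
have [N HN] := small_N e0.
exists (a x N); apply: (filterS _ (nbhs_infty_ge N)) => k hk /=.
rewrite -ball_normE /=.
rewrite -(subnKC hk) distrC (le_lt_trans (telesc x N (k - N))) //.
apply: le_lt_trans HN; rewrite ler_wpM2l ?ltW ?C_gt0 // ltrBlDr ltrDl.
by rewrite invr_gt0 exprn_gt0.
Qed.

Lemma fhat_bound x : `|fhat mul one f x - f x| <= C.
Proof.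
have ha := @a_cvg x.
have e0 : a x 0 = f x by rewrite /a expr0 invr1 scale1r expn0 (p1 HG).
have hB : (fun k => `|a x k - f x|) @ \oo --> `|lim (a x @ \oo) - f x|.
  by apply: cvg_norm; apply: cvgB => //; exact: cvg_cst.
have hl : lim ((fun k => `|a x k - f x|) @ \oo) = `|lim (a x @ \oo) - f x|.
  exact: cvg_lim.
rewrite /fhat -/(a x) -hl.
apply: limr_le; first exact: (cvgP _ hB).
near=> k => /=.
have := telesc x 0 k; rewrite add0n e0 expr0 invr1.
move=> h; apply: le_trans h _.
by rewrite ger_pMr ?C_gt0 // gerBl invr_ge0 exprn_ge0.
Unshelve. all: by end_near.
Qed.

Lemma small_K K e : 0 < K -> 0 < e -> exists N, K * ((2:R) ^+ N)^-1 < e.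
Proof.
move=> hK e0.
have h : `|(2:R)^-1| < 1 by rewrite ger0_norm ?invr_ge0 // invf_lt1 // ltr1n.
have /cvgr0_norm_lt /(_ (e / K)) := cvg_expr h.
move=> /(_ (divr_gt0 e0 hK)) [N _ HN].
exists N; have := HN N (leqnn N) => /=.
rewrite -exprVn ger0_norm ?exprn_ge0 ?invr_ge0 // ltr_pdivlMr // mulrC.
done.
Qed.

Lemma inv2_le N k : (N <= k)%N -> ((2:R) ^+ k)^-1 <= ((2:R) ^+ N)^-1.
Proof.
by move=> h; rewrite lef_pV2 ?posrE ?exprn_gt0 // ler_eXn2l // ltr1n.
Qed.

Lemma fhat_jensen g h : comm mul g h ->
  fhat mul one f (mul g h) + fhat mul one f (mul g (inv h)) = (2:R) *: fhat mul one f g.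
Proof.
move=> gh; rewrite /fhat -!/(a _).
set u := fun k => a (mul g h) k + a (mul g (inv h)) k - (2:R) *: a g k.
have h1 : u @ \oo --> lim (a (mul g h) @ \oo) + lim (a (mul g (inv h)) @ \oo)
     - (2:R) *: lim (a g @ \oo).
  apply: cvgB; first by apply: cvgD; exact: a_cvg.
  by apply: cvgZ; [exact: cvg_cst | exact: a_cvg].
have h2 : u @ \oo --> 0.
  apply/cvgrPdist_le => e e0.
  have [N HN] := small_K hc e0.
  apply: (filterS _ (nbhs_infty_ge N)) => k hk /=.
  rewrite sub0r normrN /u /a.
  set s := ((2:R) ^+ k)^-1.
  rewrite [(2:R) *: (s *: _)]scalerA [2 * s]mulrC -scalerA -scalerDr -scalerBr normrZ.
  rewrite (p_mul HG _ gh) (p_mul HG _ (comm_inv HG gh)) (p_inv HG).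
  rewrite ger0_norm ?invr_ge0 ?exprn_ge0 //.
  apply: le_trans (ltW HN); rewrite mulrC.
  apply: ler_pM; rewrite ?invr_ge0 ?exprn_ge0 ?inv2_le //.
have := cvg_lim _ h1; rewrite (cvg_lim _ h2) => e.
apply/eqP; rewrite -subr_eq0 -e //; exact: norm_hausdorff.
all: exact: norm_hausdorff.
Qed.

Lemma shuffle (V : zmodType) (p' a' q b r s : V) :
  p' + a' + (q + b) - (r + s) = (a' + b - s) + (p' + (q - r)).
Proof. by rewrite opprD !addrA [LHS](ACl (2*4*6*1*3*5)). Qed.

Local Notation F := (fhat mul one f).

Lemma p_one n : p one n = one.
Proof. by elim: n => //= n ->; rewrite (gmul1 HG). Qed.

Lemma F_one : F one = 0.
Proof.
rewrite /fhat.
have h : `|(2:R)^-1| < 1 by rewrite ger0_norm ?invr_ge0 // invf_lt1 // ltr1n.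
apply: cvg_lim; first exact: norm_hausdorff.
have -> : (fun k => ((2:R) ^+ k)^-1 *: f (p one (2 ^ k)%N)) = (fun k => ((2:R)^-1 ^+ k) *: f one).
  by apply: funext => k; rewrite p_one exprVn.
rewrite -(scale0r (f one)); apply: cvgZ; [exact: cvg_expr | exact: cvg_cst].
Qed.

Lemma F_inv g : F (inv g) = - F g.
Proof.
have := fhat_jensen (comm1 HG g); rewrite !(gmul1 HG) F_one scaler0.
by move/eqP; rewrite addrC addr_eq0 => /eqP.
Qed.

Lemma F_rec x n : F (p x n.+2) + F (p x n) = (2:R) *: F (p x n.+1).
Proof.
have := fhat_jensen (comm_pp HG x n.+1 1); rewrite -(pD HG) addn1 (p1 HG).
have -> : mul (p x n.+1) (inv x) = p x n.
  by rewrite -addn1 (pD HG) (p1 HG) -(gmulA HG) (gmulV HG) (gmul1r HG).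
done.
Qed.

Lemma F_nat x n : F (p x n) = n%:R *: F x.
Proof.
suff : F (p x n) = n%:R *: F x /\ F (p x n.+1) = n.+1%:R *: F x by case.
elim: n => [|n [IH1 IH2]]; first by rewrite /= F_one scale0r (gmul1r HG) scale1r.
split=> //; have := F_rec x n; rewrite IH1 IH2 => /(canRL (addrK _)) ->.
rewrite scalerA -scalerBl; congr (_ *: _).
rewrite -[n.+2]addn2 -[n.+1]addn1 !natrD; lra.
Qed.

Lemma F_int x (n : int) : F (gpowz mul inv one x n) = n%:~R *: F x.
Proof.
case: n => n /=; first exact: F_nat.
by rewrite F_inv (F_nat x n.+1) NegzE mulrNz scaleNr.
Qed.

Lemma F_jensen_bound x y :
  `|F (mul x y) + F (mul x (inv y)) - (2:R) *: F x| <= c + 4 * C.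
Proof.
set A := F (mul x y); set B := F (mul x (inv y)); set Fx := F x.
set a1 := f (mul x y); set b1 := f (mul x (inv y)); set f1 := f x.
have -> : A + B - (2:R) *: Fx = (A - a1) + a1 + ((B - b1) + b1) - ((2:R) *: (Fx - f1) + (2:R) *: f1).
  by rewrite !subrK -scalerDr subrK.
rewrite shuffle (le_trans (ler_normD _ _)) //.
have h4 : 4 * C = C + (C + 2 * C) by lra.
rewrite h4 lerD ?hf // (le_trans (ler_normD _ _)) // lerD ?fhat_bound //.
rewrite (le_trans (ler_normB _ _)) // lerD ?fhat_bound //.
rewrite normrZ ger0_norm // ler_wpM2l // fhat_bound //.
Qed.
End An.

Unset Implicit Arguments.
Theorem lemma2p8 (R : realType) (G : Type) (mul : G -> G -> G) (inv : G -> G)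
  (one : G) (HG : is_group mul inv one) (E : completeNormedModType R)
  (f : G -> E) (c : R) (hc : 0 < c)
  (hf : forall x y : G,
      `| f (mul x y) + f (mul x (inv y)) - (2 : R) *: f x | <= c) :
  (forall x : G,
     cvg ((fun k : nat => ((2 : R) ^+ k)^-1 *: f (gpown mul one x (2 ^ k)%N)) @ \oo)) /\
  pseudo_Jensen mul inv one (fhat mul one f) /\
  (forall x : G, `| fhat mul one f x - f x | <= c + `| f one |).
Proof.
split; first by move=> x; exact: (@a_cvg _ _ _ _ _ HG _ _ _ hc hf x).
split; last by move=> x; exact: (fhat_bound HG hc hf x).
split; last by move=> x n; exact: (F_int HG hc hf x n).
exists (c + 4 * (c + `|f one|)); last by move=> x y; exact: (F_jensen_bound HG hc hf x y).
apply: (lt_le_trans hc); rewrite lerDl; apply: mulr_ge0 => //; apply: addr_ge0 => //; exact: ltW.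
Qed.
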